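(* Let $\oplus$ be a combinator whose domain is contained in $V(W)$. Then $\oplus$ is a TeamQueue combinator if and only if $\oplus$ is basic and satisfies, for every pair $\langle\preceq_1,\preceq_2\rangle$ in its domain and all $x,y,z \in W$: ($\oplus$SPU+) if $x \prec_1 y$ and $z \prec_2 y$ then $x \prec_{1\oplus 2} y$ or $z \prec_{1\oplus 2} y$; ($\oplus$WPU+) if $x \preceq_1 y$ and $z \preceq_2 y$ then $x \preceq_{1\oplus 2} y$ or $z \preceq_{1\oplus 2} y$.
   Context: $W$ is a finite nonempty set (of possible worlds). A tpo is a total preorder on $W$; $\prec$ is its strict part. For $S \subseteq W$, $\min(\preceq, S) = \{x \in S : x \preceq y \text{ for all } y \in S\}$. Two tpos $\preceq_1, \preceq_2$ are $S$-variants ($S \subseteq W$) if $x \preceq_1 y \iff x \preceq_2 y$ for all $(x,y) \in (S\times S) \cup (S^c \times S^c)$; $V(W)$ is the set of pairs $\langle\preceq_1,\preceq_2\rangle$ of tpos that are $S$-variants for some $S \subseteq W$. A combinator $\oplus$ maps pairs of tpos in its domain to a tpo $\preceq_{1\oplus 2}$. It is basic if $\min(\preceq_{1\oplus 2}, W) = \min(\preceq_1, W) \cup \min(\preceq_2, W)$ for every pair in its domain. $\oplus$ is a TeamQueue combinator if for each pair $\langle\preceq_1,\preceq_2\rangle$ in its domain there is a sequence $\langle a(i)\rangle_{i \in \mathbb{N}}$ with $\emptyset \neq a(i) \subseteq \{1,2\}$ and $a(1) = \{1,2\}$, such that $\preceq_{1\oplus 2}$ is the tpo with ordered partition into ranks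 (most plausible first) $\langle T_1, \ldots, T_m\rangle$, where $T_i = \bigcup_{j \in a(i)} \min(\preceq_j, \bigcap_{k<i} T_k^c)$ and $m$ is minimal with $\bigcup_{i \le m} T_i = W$. *)

(* Defs.v *)
From mathcomp Require Import all_boot all_order.
Set Implicit Arguments. Unset Strict Implicit. Unset Printing Implicit Defensive.

Section TeamQueueDefs.
Variable W : finType.

Definition tpo (R : rel W) : Prop :=
  (forall x y, R x y || R y x) /\ (forall x y z, R x y -> R y z -> R x z).

Definition strict (R : rel W) (x y : W) : bool := R x y && ~~ R y x.

Definition minr (R : rel W) (S : {set W}) : {set W} :=
  [set x in S | [forall y in S, R x y]].

Definition Svariants (S : {set W}) (R1 R2 : rel W) : Prop :=
  forall x y, ((x \in S) && (y \in S)) || ((x \notin S) && (y \notin S)) ->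
    (R1 x y <-> R2 x y).

Definition inV (R1 R2 : rel W) : Prop :=
  tpo R1 /\ tpo R2 /\ exists S : {set W}, Svariants S R1 R2.

(* agent index: ord0 = agent 1, ord1 = agent 2 *)
Definition agent (R1 R2 : rel W) (j : 'I_2) : rel W :=
  if j == ord0 then R1 else R2.

Definition tq_step (R1 R2 : rel W) (A : {set 'I_2}) (r : {set W}) : {set W} :=
  \bigcup_(j in A) minr (agent R1 R2 j) r.

(* remaining worlds after cells T_1..T_k: rem k = ∩_{i<=k} T_i^c *)
Fixpoint tq_rem (R1 R2 : rel W) (a : nat -> {set 'I_2}) (k : nat) : {set W} :=
  match k with
  | 0 => setT
  | k'.+1 => tq_rem R1 R2 a k' :\: tq_step R1 R2 (a k) (tq_rem R1 R2 a k')
  end.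

(* the cell T_i (i >= 1) *)
Definition tq_cell (R1 R2 : rel W) (a : nat -> {set 'I_2}) (i : nat) : {set W} :=
  tq_step R1 R2 (a i) (tq_rem R1 R2 a i.-1).

Definition tq_upto (R1 R2 : rel W) (a : nat -> {set 'I_2}) (m : nat) : {set W} :=
  \bigcup_(1 <= i < m.+1) tq_cell R1 R2 a i.

(* R is the TeamQueue result of (R1,R2) for the sequence a:
   R is the tpo with ordered partition <T_1,...,T_m>, m minimal with
   T_1 ∪ ... ∪ T_m = W. *)
Definition tq_result (R1 R2 : rel W) (a : nat -> {set 'I_2}) (R : rel W) : Prop :=
  exists m : nat,
    tq_upto R1 R2 a m = setT /\
    (forall m', m' < m -> tq_upto R1 R2 a m' != setT) /\
    (forall x y, R x y <->
       exists i j, [/\ 1 <= i, i <= j, j <= m,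
                       x \in tq_cell R1 R2 a i & y \in tq_cell R1 R2 a j]).

Definition combinator (D : rel W -> rel W -> Prop)
  (comb : rel W -> rel W -> rel W) : Prop :=
  forall R1 R2, D R1 R2 -> tpo R1 -> tpo R2 -> tpo (comb R1 R2).

Definition TeamQueue (D : rel W -> rel W -> Prop)
  (comb : rel W -> rel W -> rel W) : Prop :=
  forall R1 R2, D R1 R2 ->
    exists a : nat -> {set 'I_2},
      a 1 = setT /\ (forall i, 0 < i -> a i != set0) /\
      tq_result R1 R2 a (comb R1 R2).

Definition basic (D : rel W -> rel W -> Prop)
  (comb : rel W -> rel W -> rel W) : Prop :=
  forall R1 R2, D R1 R2 ->
    minr (comb R1 R2) setT = minr R1 setT :|: minr R2 setT.

Definition SPUplus (D : rel W -> rel W -> Prop)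
  (comb : rel W -> rel W -> rel W) : Prop :=
  forall R1 R2, D R1 R2 -> forall x y z,
    strict R1 x y -> strict R2 z y ->
    strict (comb R1 R2) x y || strict (comb R1 R2) z y.

Definition WPUplus (D : rel W -> rel W -> Prop)
  (comb : rel W -> rel W -> rel W) : Prop :=
  forall R1 R2, D R1 R2 -> forall x y z,
    R1 x y -> R2 z y ->
    comb R1 R2 x y || comb R1 R2 z y.

End TeamQueueDefs.

(* Main.v *)
Require Import Defs.
From mathcomp Require Import all_boot all_order.
Set Implicit Arguments. Unset Strict Implicit. Unset Printing Implicit Defensive.

Section Aux.
Variable W : finType.
Implicit Types (R C : rel W) (S r : {set W}).

Lemma minrP R S x :
  reflect (x \in S /\ forall y, y \in S -> R x y) (x \in minr R S).
Proof.
rewrite /minr inE; apply: (iffP andP) => [[H1 /forall_inP H2]|[H1 H2]]; split=> //.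
by apply/forall_inP.
Qed.

Lemma minr_sub R S : minr R S \subset S.
Proof. by apply/subsetP=> x /minrP[]. Qed.

Lemma minr_nonempty R S x0 : tpo R -> x0 \in S -> exists x, x \in minr R S.
Proof.
move=> [Htot Htr] Hx0.
case: (arg_minnP (fun x => #|[set y | R y x]|) Hx0) => x Hx Hmin.
exists x; apply/minrP; split=> // y Hy.
case Hxy: (R x y) => //; exfalso.
have Hyx : R y x by move: (Htot x y); rewrite Hxy.
have : [set z | R z y] \proper [set z | R z x].
  apply/properP; split.
    by apply/subsetP=> z; rewrite !inE => Hz; apply: Htr Hz Hyx.
  by exists x; rewrite !inE ?Hxy //; move: (Htot x x); rewrite orbb.
move/proper_card; move: (Hmin y Hy); rewrite leqNgt => /negP; auto.
Qed.

Lemma minr_trans C S x y : tpo C -> y \in minr C S -> x \in S -> C x y ->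
  x \in minr C S.
Proof.
move=> [_ Htr] /minrP[Hy Hmy] Hx Hxy; apply/minrP; split=> // z Hz.
exact: Htr Hxy (Hmy z Hz).
Qed.

Definition o1 : 'I_2 := Ordinal (isT : 1 < 2).

Lemma I2_cases (j : 'I_2) : j = ord0 \/ j = o1.
Proof.
case: j => m Hm; case: m Hm => [|m] Hm; first by left; apply/val_inj.
case: m Hm => [|m] Hm; first by right; apply/val_inj.
by [].
Qed.

Lemma stepP R1 R2 A r y :
  y \in tq_step R1 R2 A r <->
  (ord0 \in A /\ y \in minr R1 r) \/ (o1 \in A /\ y \in minr R2 r).
Proof.
rewrite /tq_step; split.
  case/bigcupP=> j Hj; case: (I2_cases j) Hj => -> Hj; rewrite /agent /= => H.
    by left.
  by right.
case=> [[H1 H2]|[H1 H2]]; apply/bigcupP.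
  by exists ord0.
by exists o1.
Qed.

Lemma in_bigU (F : nat -> {set W}) s x :
  x \in \big[@setU _/set0]_(i <- s) F i = has (fun i => x \in F i) s.
Proof. by elim: s => [|i s IH]; rewrite ?big_nil ?big_cons ?inE //= IH. Qed.

Lemma in_upto R1 R2 a m x :
  x \in tq_upto R1 R2 a m <-> exists i, [/\ 1 <= i, i <= m & x \in tq_cell R1 R2 a i].
Proof.
rewrite /tq_upto in_bigU; split.
  by case/hasP=> i; rewrite mem_index_iota => /andP[H1 H2] Hx; exists i.
by case=> i [H1 H2 Hx]; apply/hasP; exists i; rewrite // mem_index_iota H1.
Qed.

Lemma rem_notin R1 R2 a k x :
  x \notin tq_rem R1 R2 a k <-> exists i, [/\ 1 <= i, i <= k & x \in tq_cell R1 R2 a i].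
Proof.
elim: k => [|k IH] /=.
  by rewrite inE; split=> // [[[|i] [H1 H2 _]]].
rewrite inE negb_and negbK; split.
  case/orP=> H.
    by exists k.+1.
  by case/IH: H => i [H1 H2 H3]; exists i; split=> //; rewrite ltnW.
case=> i [H1 H2 H3]; case: (ltngtP i k.+1) H2 => // Hi _.
  by apply/orP; right; apply/IH; exists i.
by subst i; apply/orP; left.
Qed.

Lemma rem_mono R1 R2 a n k : n <= k -> tq_rem R1 R2 a k \subset tq_rem R1 R2 a n.
Proof.
move/subnK=> <-; elim: (k - n) => [|d IH] //=.
by apply: subset_trans IH; apply: subsetDl.
Qed.

Lemma cell_sub R1 R2 a i : tq_cell R1 R2 a i \subset tq_rem R1 R2 a i.-1.
Proof.
apply/subsetP=> x /stepP [[_ /minrP[]]|[_ /minrP[]]] //.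
Qed.

Lemma cell_uniq R1 R2 a i j x : 1 <= i -> 1 <= j ->
  x \in tq_cell R1 R2 a i -> x \in tq_cell R1 R2 a j -> i = j.
Proof.
wlog: i j / i <= j.
  move=> H Hi Hj Hxi Hxj; case: (leqP i j) => Hij; first exact: H.
  by symmetry; apply: H => //; rewrite ltnW.
move=> Hij Hi Hj Hxi Hxj; case: (ltngtP i j) Hij => // Hlt _.
have : x \in tq_rem R1 R2 a i.
  apply: (subsetP (rem_mono R1 R2 a (_ : i <= j.-1))); first by rewrite -ltnS prednK // (leq_trans _ Hlt).
  exact: (subsetP (cell_sub R1 R2 a j)).
move=> Hin; exfalso.
have : x \notin tq_rem R1 R2 a i by apply/rem_notin; exists i.
by rewrite Hin.
Qed.

End Aux.

Section Fwd.
Variable W : finType.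
Variables (R1 R2 C : rel W) (a : nat -> {set 'I_2}) (m : nat).
Hypothesis HR1 : tpo R1.
Hypothesis HR2 : tpo R2.
Hypothesis Hm : tq_upto R1 R2 a m = setT.
Hypothesis HC : forall x y, C x y <->
       exists i j, [/\ 1 <= i, i <= j, j <= m,
                       x \in tq_cell R1 R2 a i & y \in tq_cell R1 R2 a j].

Lemma cover x : exists i, [/\ 1 <= i, i <= m & x \in tq_cell R1 R2 a i].
Proof. by apply/in_upto; rewrite Hm inE. Qed.

Lemma F2 x y i j : 1 <= i -> i <= m -> 1 <= j -> j <= m ->
  x \in tq_cell R1 R2 a i -> y \in tq_cell R1 R2 a j -> C x y = (i <= j).
Proof.
move=> Hi Him Hj Hjm Hx Hy; apply/idP/idP.
  case/HC=> i' [j' [Hi' Hij' Hj'm Hx' Hy']].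
  rewrite (cell_uniq Hi Hi' Hx Hx') (cell_uniq Hj (leq_trans Hi' Hij') Hy Hy') //.
by move=> Hij; apply/HC; exists i, j.
Qed.

Lemma fwd_WPU x y z : R1 x y -> R2 z y -> C x y || C z y.
Proof.
move=> Hxy Hzy.
case: (cover y) => j [Hj Hjm Hyj].
case: (cover x) => i [Hi Him Hxi].
case: (cover z) => k [Hk Hkm Hzk].
case: (leqP i j) => Hij; first by rewrite (F2 Hi Him Hj Hjm Hxi Hyj) Hij.
case: (leqP k j) => Hkj; first by rewrite (F2 Hk Hkm Hj Hjm Hzk Hyj) Hkj orbT.
exfalso.
have Hx : x \in tq_rem R1 R2 a j.-1.
  apply: (subsetP (rem_mono R1 R2 a (_ : j.-1 <= i.-1))); first by rewrite -!subn1 leq_sub2r // ltnW.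
  exact: (subsetP (cell_sub R1 R2 a i)).
have Hz : z \in tq_rem R1 R2 a j.-1.
  apply: (subsetP (rem_mono R1 R2 a (_ : j.-1 <= k.-1))); first by rewrite -!subn1 leq_sub2r // ltnW.
  exact: (subsetP (cell_sub R1 R2 a k)).
have := Hyj; rewrite /tq_cell => /stepP [[Ha Hy]|[Ha Hy]].
  have Hx' : x \in tq_cell R1 R2 a j by apply/stepP; left; split=> //; apply: minr_trans Hy Hx Hxy.
  by move: (cell_uniq Hi Hj Hxi Hx') Hij => ->; rewrite ltnn.
have Hz' : z \in tq_cell R1 R2 a j by apply/stepP; right; split=> //; apply: minr_trans Hy Hz Hzy.
by move: (cell_uniq Hk Hj Hzk Hz') Hkj => ->; rewrite ltnn.
Qed.

Lemma fwd_SPU x y z : strict R1 x y -> strict R2 z y -> strict C x y || strict C z y.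
Proof.
move=> /andP[Hxy Hyx] /andP[Hzy Hyz].
case: (cover y) => j [Hj Hjm Hyj].
case: (cover x) => i [Hi Him Hxi].
case: (cover z) => k [Hk Hkm Hzk].
rewrite /strict (F2 Hi Him Hj Hjm Hxi Hyj) (F2 Hj Hjm Hi Him Hyj Hxi)
  (F2 Hk Hkm Hj Hjm Hzk Hyj) (F2 Hj Hjm Hk Hkm Hyj Hzk) -!ltnNge.
have := Hyj; rewrite /tq_cell => /stepP [[Ha /minrP[_ Hy]]|[Ha /minrP[_ Hy]]].
  case: (ltnP i j) => Hji; first by rewrite (ltnW Hji).
  exfalso; move/negP: Hyx; apply; apply: Hy.
  apply: (subsetP (rem_mono R1 R2 a (_ : j.-1 <= i.-1))); first by rewrite -!subn1; apply: leq_sub2r.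
  exact: (subsetP (cell_sub R1 R2 a i)).
case: (ltnP k j) => Hjk; first by rewrite (ltnW Hjk) orbT.
exfalso; move/negP: Hyz; apply; apply: Hy.
apply: (subsetP (rem_mono R1 R2 a (_ : j.-1 <= k.-1))); first by rewrite -!subn1; apply: leq_sub2r.
exact: (subsetP (cell_sub R1 R2 a k)).
Qed.

Lemma fwd_basic (w0 : W) : a 1 = setT ->
  minr C setT = minr R1 setT :|: minr R2 setT.
Proof.
move=> Ha1.
have Hc1 : forall x, (x \in tq_cell R1 R2 a 1) = (x \in minr R1 setT) || (x \in minr R2 setT).
  move=> x; apply/idP/idP.
    by rewrite /tq_cell /= Ha1 => /stepP [[_ ->]|[_ ->]] //; rewrite orbT.
  by case/orP=> H; rewrite /tq_cell /= Ha1; apply/stepP; [left|right]; rewrite inE.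
apply/setP=> x; rewrite in_setU -Hc1; apply/idP/idP.
  case/minrP=> _ Hx.
  case: (minr_nonempty HR1 (in_setT w0)) => y Hy.
  have Hy1 : y \in tq_cell R1 R2 a 1 by rewrite Hc1 Hy.
  case: (cover y) => j [Hj Hjm _].
  case: (cover x) => i [Hi Him Hxi].
  have := Hx y (in_setT y); rewrite (F2 Hi Him (leqnn 1) (leq_trans Hj Hjm) Hxi Hy1).
  by case: i Hi Him Hxi => [|[|i]].
move=> Hx1; apply/minrP; split=> [|y _]; first by rewrite inE.
case: (cover y) => j [Hj Hjm Hyj].
by rewrite (F2 (leqnn 1) (leq_trans Hj Hjm) Hj Hjm Hx1 Hyj).
Qed.

End Fwd.

Section Key.
Variable W : finType.

Lemma sv_same (S : {set W}) Ra Rb x y : Svariants S Ra Rb -> (x \in S) = (y \in S) ->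
  (Ra x y <-> Rb x y).
Proof. by move=> H E; apply: H; rewrite E; case: (y \in S). Qed.

Lemma minrN (R : rel W) (r : {set W}) y : y \in r -> y \notin minr R r -> exists2 x, x \in r & ~~ R y x.
Proof. by move=> Hy; rewrite /minr inE Hy /= => /forall_inPn [x Hx Hn]; exists x. Qed.

Lemma lemL (Ra Rb C : rel W) (S r : {set W}) x y :
  tpo Ra -> tpo Rb -> tpo C -> Svariants S Ra Rb ->
  (forall x y z, Ra x y -> Rb z y -> C x y || C z y) ->
  y \in minr C r -> y \in minr Ra r -> x \in minr Ra r -> x \notin minr C r ->
  y \in minr Rb r.
Proof.
move=> [tA trA] [tB trB] HtC Hsv Hw HyC HyA HxA HxC.
have [Hyr HyAm] := minrP _ _ _ HyA.
have [Hxr HxAm] := minrP _ _ _ HxA.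
have nCxy : ~~ C x y.
  by apply/negP => Cxy; apply: (negP HxC); apply: minr_trans HtC HyC Hxr Cxy.
have nBxy : ~~ Rb x y.
  by apply/negP => Bxy; move: (Hw x y x (HxAm y Hyr) Bxy); rewrite orbb (negbTE nCxy).
apply/minrP; split=> // z Hz; apply/negPn/negP => nByz.
have Bzy : Rb z y by move: (tB y z); rewrite (negbTE nByz).
have Ayz := HyAm z Hz.
case Eyz: ((y \in S) == (z \in S)).
  by move: ((sv_same Hsv (eqP Eyz)).1 Ayz); rewrite (negbTE nByz).
case Exy: ((x \in S) == (y \in S)).
  by move: ((sv_same Hsv (eqP Exy)).1 (HxAm y Hyr)); rewrite (negbTE nBxy).
have Exz : (x \in S) = (z \in S).
  by move: Eyz Exy; case: (x \in S); case: (y \in S); case: (z \in S).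
move: (trB _ _ _ ((sv_same Hsv Exz).1 (HxAm z Hz)) Bzy); by rewrite (negbTE nBxy).
Qed.

Variables (R1 R2 C : rel W) (S : {set W}).
Hypotheses (HR1 : tpo R1) (HR2 : tpo R2) (HC : tpo C) (Hsv : Svariants S R1 R2).
Hypothesis Hs : forall x y z, strict R1 x y -> strict R2 z y -> strict C x y || strict C z y.
Hypothesis Hw : forall x y z, R1 x y -> R2 z y -> C x y || C z y.

Definition Aset (r : {set W}) : {set 'I_2} :=
  [set j | minr (agent R1 R2 j) r \subset minr C r].

Lemma agent0 : agent R1 R2 ord0 = R1. Proof. by rewrite /agent eqxx. Qed.
Lemma agent1 : agent R1 R2 o1 = R2. Proof. by []. Qed.

Lemma Aset0 r : (ord0 \in Aset r) = (minr R1 r \subset minr C r).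
Proof. by rewrite inE agent0. Qed.
Lemma Aset1 r : (o1 \in Aset r) = (minr R2 r \subset minr C r).
Proof. by rewrite inE agent1. Qed.

Lemma keyA r y : y \in minr C r -> y \in tq_step R1 R2 (Aset r) r.
Proof.
move=> HyC; have [Hyr HyCm] := minrP _ _ _ HyC.
apply/stepP; rewrite Aset0 Aset1.
have Hstep1 : (y \in minr R1 r) || (y \in minr R2 r).
  case Hy1: (y \in minr R1 r) => //; case Hy2: (y \in minr R2 r) => //.
  case: (minrN Hyr (negbT Hy1)) => x Hx nx.
  case: (minrN Hyr (negbT Hy2)) => z Hz nz.
  have sx : strict R1 x y by rewrite /strict nx andbT; move: (HR1.1 x y); rewrite (negbTE nx) orbF.
  have sz : strict R2 z y by rewrite /strict nz andbT; move: (HR2.1 z y); rewrite (negbTE nz) orbF.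
  by move: (Hs sx sz); rewrite /strict (HyCm x Hx) (HyCm z Hz) !andbF.
have Hstep2 : (minr R1 r \subset minr C r) || (minr R2 r \subset minr C r).
  case H1: (minr R1 r \subset minr C r) => //; case H2: (minr R2 r \subset minr C r) => //.
  case/subsetPn: (negbT H1) => x Hx1 HxC.
  case/subsetPn: (negbT H2) => z Hz1 HzC.
  have [Hxr Hxm] := minrP _ _ _ Hx1.
  have [Hzr Hzm] := minrP _ _ _ Hz1.
  case/orP: (Hw (Hxm y Hyr) (Hzm y Hyr)) => H.
    by move: HxC; rewrite (minr_trans HC HyC Hxr H).
  by move: HzC; rewrite (minr_trans HC HyC Hzr H).
case/orP: Hstep1 => Hy.
  case H1: (minr R1 r \subset minr C r); first by left.
  right; split; first by move: Hstep2; rewrite H1.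
  case/subsetPn: (negbT H1) => x Hx1 HxC.
  exact: (lemL HR1 HR2 HC Hsv Hw HyC Hy Hx1 HxC).
case H2: (minr R2 r \subset minr C r); first by right.
left; split; first by move: Hstep2; rewrite H2 orbF.
case/subsetPn: (negbT H2) => x Hx1 HxC.
have Hsv' : Svariants S R2 R1 by move=> u v H; apply: iff_sym; apply: Hsv.
have Hw' : forall x y z, R2 x y -> R1 z y -> C x y || C z y.
  by move=> u v w H H'; rewrite orbC; apply: Hw.
exact: (lemL HR2 HR1 HC Hsv' Hw' HyC Hy Hx1 HxC).
Qed.

Lemma key_eq r : tq_step R1 R2 (Aset r) r = minr C r.
Proof.
apply/setP=> y; apply/idP/idP; last exact: keyA.
case/stepP=> [[H1 H2]|[H1 H2]].
  by move: H1; rewrite Aset0 => /subsetP; apply.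
by move: H1; rewrite Aset1 => /subsetP; apply.
Qed.

Lemma Aset_neq0 r : Aset r != set0.
Proof.
case: (set_0Vmem r) => [->|[x Hx]].
  apply/set0Pn; exists ord0; rewrite Aset0; apply/subsetP=> u Hu.
  by move: (subsetP (minr_sub R1 set0) u Hu); rewrite inE.
case: (minr_nonempty HC Hx) => y Hy.
case/stepP: (keyA Hy) => [[H _]|[H _]]; apply/set0Pn; by [exists ord0|exists o1].
Qed.

End Key.

Section Rev.
Variable W : finType.
Variables (R1 R2 C : rel W) (S : {set W}).
Hypotheses (HR1 : tpo R1) (HR2 : tpo R2) (HC : tpo C) (Hsv : Svariants S R1 R2).
Hypothesis Hs : forall x y z, strict R1 x y -> strict R2 z y -> strict C x y || strict C z y.
Hypothesis Hw : forall x y z, R1 x y -> R2 z y -> C x y || C z y.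
Hypothesis Hb : minr C setT = minr R1 setT :|: minr R2 setT.

Fixpoint crem (k : nat) : {set W} :=
  match k with 0 => setT | k'.+1 => crem k' :\: minr C (crem k') end.

Definition aseq (i : nat) : {set 'I_2} := Aset R1 R2 C (crem i.-1).

Lemma rem_eq k : tq_rem R1 R2 aseq k = crem k.
Proof.
elim: k => [|k IH] //=; rewrite IH.
by rewrite /aseq /= (key_eq HR1 HR2 HC Hsv Hs Hw).
Qed.

Lemma cell_eq i : tq_cell R1 R2 aseq i = minr C (tq_rem R1 R2 aseq i.-1).
Proof. by rewrite /tq_cell !rem_eq (key_eq HR1 HR2 HC Hsv Hs Hw). Qed.

Lemma crem_card k : crem k = set0 \/ #|crem k| + k <= #|W|.
Proof.
elim: k => [|k [IH|IH]] /=; first by right; rewrite addn0 cardsT.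
  by left; rewrite IH; apply/setP=> x; rewrite !inE.
case: (set_0Vmem (crem k)) => [E|[x Hx]]; first by left; rewrite E; apply/setP=> u; rewrite !inE.
right; case: (minr_nonempty HC Hx) => y Hy.
have : crem k :\: minr C (crem k) \proper crem k.
  apply/properP; split; first exact: subsetDl.
  by exists y; [exact: (subsetP (minr_sub C _) y Hy)|rewrite inE Hy].
move/proper_card => Hlt; rewrite addnS; apply: leq_trans IH.
by rewrite ltn_add2r.
Qed.

Lemma crem_ex : exists k, crem k == set0.
Proof.
exists #|W|.+1; case: (crem_card #|W|.+1) => [->//|].
by rewrite addnS ltnNge leq_addl.
Qed.

Lemma upto_eq k : tq_upto R1 R2 aseq k = ~: crem k.
Proof.
apply/setP=> x; rewrite in_setC -rem_eq; apply/idP/idP => H.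
  by apply/rem_notin; apply/in_upto.
by apply/in_upto; apply/rem_notin.
Qed.

Lemma aseq1 : aseq 1 = setT.
Proof.
apply/setP=> j; rewrite in_setT /aseq /=.
case: (I2_cases j) => ->.
  by rewrite Aset0 Hb subsetUl.
by rewrite Aset1 Hb subsetUr.
Qed.

Lemma rev_result : tq_result R1 R2 aseq C.
Proof.
pose m := ex_minn crem_ex.
have [Hm0 Hmin] : crem m == set0 /\ forall k, crem k == set0 -> m <= k.
  by rewrite /m; case: ex_minnP.
exists m; split; [|split].
- by rewrite upto_eq (eqP Hm0) setC0.
- move=> m' Hm'; rewrite upto_eq; apply/negP => /eqP H.
  have : crem m' == set0 by rewrite -(setCK (crem m')) H setCT.
  by move/Hmin; rewrite leqNgt Hm'.
move=> x y; split.
  move=> Cxy.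
  have Hcov : forall u, exists i, [/\ 1 <= i, i <= m & u \in tq_cell R1 R2 aseq i].
    by move=> u; apply/rem_notin; rewrite rem_eq (eqP Hm0) inE.
  case: (Hcov x) => i [Hi Him Hxi]; case: (Hcov y) => j [Hj Hjm Hyj].
  exists i, j; split=> //.
  case: (leqP i j) => // Hji; exfalso.
  have Hx : x \in tq_rem R1 R2 aseq j.-1.
    apply: (subsetP (rem_mono R1 R2 aseq (_ : j.-1 <= i.-1))); first by rewrite -!subn1; apply: leq_sub2r; apply: ltnW.
    exact: (subsetP (cell_sub R1 R2 aseq i)).
  have Hxj : x \notin tq_cell R1 R2 aseq j.
    by apply/negP => H; move: (cell_uniq Hi Hj Hxi H) Hji => ->; rewrite ltnn.
  move: Hyj Hxj; rewrite !cell_eq => Hyj Hxj.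
  case: (minrN Hx Hxj) => w Hw' nxw.
  have [_ Hym] := minrP _ _ _ Hyj.
  by move/negP: nxw; apply; apply: HC.2 Cxy (Hym w Hw').
case=> i [j [Hi Hij Hjm Hxi Hyj]].
move: Hxi; rewrite cell_eq => /minrP [_ Hxm]; apply: Hxm.
apply: (subsetP (rem_mono R1 R2 aseq (_ : i.-1 <= j.-1))); first by rewrite -!subn1; apply: leq_sub2r.
exact: (subsetP (cell_sub R1 R2 aseq j)).
Qed.

End Rev.

Theorem proposition5 (W : finType) (w0 : W)
  (D : rel W -> rel W -> Prop) (comb : rel W -> rel W -> rel W)
  (HD : forall R1 R2, D R1 R2 -> inV R1 R2)
  (Hcomb : combinator D comb) :
  TeamQueue D comb <->
  (basic D comb /\ SPUplus D comb /\ WPUplus D comb).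
Proof.
split.
  move=> HTQ; split; [|split] => R1 R2 HD12;
    have [HR1 [HR2 _]] := HD _ _ HD12;
    case: (HTQ _ _ HD12) => a [Ha1 [Hane [m [Hm [_ Hrel]]]]].
  - by eapply fwd_basic; eauto.
  - by move=> x y z; eapply fwd_SPU; eauto.
  - by move=> x y z; eapply fwd_WPU; eauto.
move=> [Hb [Hs Hw]] R1 R2 HD12.
have [HR1 [HR2 [S Hsv]]] := HD _ _ HD12.
have HC := Hcomb _ _ HD12 HR1 HR2.
exists (aseq R1 R2 (comb R1 R2)); split; [|split].
- exact: aseq1 (Hb _ _ HD12).
- by move=> i _; apply: Aset_neq0 HR1 HR2 HC Hsv (Hs _ _ HD12) (Hw _ _ HD12) _.
- exact: rev_result HR1 HR2 HC Hsv (Hs _ _ HD12) (Hw _ _ HD12).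
Qed.
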